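(* Let $H$ be a finite abelian group and $k$ a positive integer. Suppose that for infinitely many primes $p$, every non-zero sum subset of size $k$ of $(\mathbb{Z}_p \times H) \setminus \{0_{\mathbb{Z}_p\times H}\}$ is sequenceable. Then there exists a positive integer $N(k)$ such that for every abelian group $G$ with $\vartheta(G) > N(k)$, every non-zero sum subset of size $k$ of $(G \times H) \setminus \{0_{G\times H}\}$ is sequenceable.
   Context: For an abelian group $G$, $\vartheta(G) = \min_{0_G \neq g \in G} o(g)$, where $o(g)$ is the order of $g$. For a finite subset $S$ of an abelian group with $|S| = k$, an ordering $(x_1,\dots,x_k)$ of $S$ has partial sums $(y_0,\dots,y_k)$ with $y_0 = 0$, $y_i = x_1+\cdots+x_i$. It is a sequencing if the $y_i$ are pairwise distinct, and a rotational sequencing if they are pairwise distinct except that $y_k = y_0 = 0$; $S$ is sequenceable if it has one or the other. $S$ is non-zero sum if the sum of its elements is nonzero. *)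

(* Defs.v *)
From HB Require Import structures.
From mathcomp Require Import all_boot all_order all_algebra.
Set Implicit Arguments. Unset Strict Implicit. Unset Printing Implicit Defensive.
Import Order.TTheory GRing.Theory.
Local Open Scope ring_scope.

(* A finite subset S of an abelian group V is represented by a duplicate-free
   sequence (uniq S); |S| = size S. *)

Definition partial_sums (V : zmodType) (x : seq V) : seq V :=
  [seq \sum_(y <- take i x) y | i <- iota 0 (size x).+1].

Definition is_sequencing (V : zmodType) (x : seq V) : bool :=
  uniq (partial_sums x).

Definition is_rotational_sequencing (V : zmodType) (x : seq V) : bool :=
  (nth 0 (partial_sums x) (size x) == 0) && uniq (take (size x) (partial_sums x)).

Definition sequenceable (V : zmodType) (S : seq V) : Prop :=
  exists x : seq V, perm_eq x S /\ (is_sequencing x \/ is_rotational_sequencing x).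

Definition nonzero_sum (V : zmodType) (S : seq V) : bool :=
  \sum_(s <- S) s != 0.

Definition all_nzs_subsets_sequenceable (V : zmodType) (k : nat) : Prop :=
  forall S : seq V, uniq S -> size S = k -> 0 \notin S -> nonzero_sum S ->
    sequenceable S.

(* o(g) > N : no m with 1 <= m <= N kills g (infinite order counts as > N). *)
Definition order_gt (V : zmodType) (g : V) (N : nat) : Prop :=
  forall m : nat, (0 < m)%N -> (m <= N)%N -> g *+ m != 0.

(* theta(V) > N, where theta(V) = min over nonzero g of o(g)
   (min of the empty family / of infinite orders taken as +infinity). *)
Definition theta_gt (V : zmodType) (N : nat) : Prop :=
  forall g : V, g != 0 -> order_gt g N.

(* Main.v *)
Require Import Defs.
From HB Require Import structures.
From mathcomp Require Import all_boot all_order all_algebra.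
Import Order.TTheory GRing.Theory Num.Theory.
Set Implicit Arguments. Unset Strict Implicit. Unset Printing Implicit Defensive.
Local Open Scope ring_scope.


Lemma ps_size (V : zmodType) (x : seq V) : size (partial_sums x) = (size x).+1.
Proof. by rewrite /partial_sums size_map size_iota. Qed.

Lemma ps_nth (V : zmodType) (x : seq V) i : (i <= size x)%N ->
  nth 0 (partial_sums x) i = \sum_(y <- take i x) y.
Proof. by move=> hi; rewrite /partial_sums (nth_map 0%N) ?size_iota // nth_iota. Qed.

Lemma take_split (T : Type) (s : seq T) i j : (i <= j)%N -> take j s = take i s ++ drop i (take j s).
Proof. move=> ij.
rewrite -{1}(cat_take_drop i (take j s)).
rewrite take_takel //.
Qed.

Lemma seg_sum (V : zmodType) k (X : 'I_k -> V) (s : seq 'I_k) i j : (i <= j)%N ->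
  \sum_(y <- take j (map X s)) y =
  \sum_(y <- take i (map X s)) y + \sum_(l <- drop i (take j s)) X l.
Proof.
move=> ij. rewrite -!map_take. rewrite !big_map.
 have e := @take_split _ s i j ij. 
rewrite {1}e. rewrite big_cat. done.
Qed.

Lemma transfer k (V W : zmodType) (X : 'I_k -> V) (Y : 'I_k -> W) (s : seq 'I_k) :
  uniq s -> (forall T : {set 'I_k}, \sum_(i in T) X i = 0 -> \sum_(i in T) Y i = 0) ->
  is_sequencing (map Y s) -> is_sequencing (map X s).
Proof.
rewrite /is_sequencing => Us HT UY.
apply/(uniqP 0) => i j. rewrite !inE. rewrite ps_size. rewrite size_map.
wlog le_ij : i j / (i <= j)%N.
  move=> H Hi Hj E; case: (leqP i j) => h; first exact: H.
  by symmetry; apply: H => //; exact: ltnW.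
move=> Hi Hj.
rewrite !ps_nth ?size_map -1?ltnS //. rewrite (@seg_sum _ _ X s i j le_ij) => E0.
have E : \sum_(l <- drop i (take j s)) X l = 0.
  by apply: (@addrI _ (\sum_(y <- take i [seq X i | i <- s]) y)); rewrite addr0 -E0.
have Us2 : uniq (drop i (take j s)) by apply: drop_uniq; apply: take_uniq.
have E2 : \sum_(l in [set x in drop i (take j s)]) X l = 0.
  by rewrite -[RHS]E (big_uniq _ Us2); apply: eq_bigl => l; rewrite inE.
have := HT _ E2.
have -> : \sum_(l in [set x in drop i (take j s)]) Y l = \sum_(l <- drop i (take j s)) Y l.
  by rewrite (big_uniq _ Us2); apply: eq_bigl => l; rewrite inE.
move=> EY.
have : nth 0 (partial_sums (map Y s)) i == nth 0 (partial_sums (map Y s)) j.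
  by rewrite !ps_nth ?size_map -1?ltnS // (@seg_sum _ _ Y s i j le_ij) EY addr0.
by rewrite nth_uniq // ?ps_size ?size_map // => /eqP.
Qed.


Definition C k := {ffun 'I_k -> 'I_3}.
Definition coef k (c : C k) (i : 'I_k) : int := (c i : nat)%:Z - 1.
Definition lin (V : zmodType) k (v : 'I_k -> V) (c : C k) : V :=
  \sum_i v i *~ coef c i.
Definition setc k (T : {set 'I_k}) : C k :=
  [ffun i => if i \in T then inord 2 else inord 1].
Definition diffc k (i j : 'I_k) : C k :=
  [ffun l => if l == i then inord 2 else if l == j then inord 0 else inord 1].

Lemma lin_set (V : zmodType) k (v : 'I_k -> V) T :
  lin v (setc T) = \sum_(i in T) v i.
Proof.
rewrite /lin [RHS]big_mkcond /=; apply: eq_bigr => i _.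
rewrite /coef ffunE; case: (i \in T); rewrite inordK //.
Qed.

Lemma sum_delta (V : zmodType) k (v : 'I_k -> V) i :
  \sum_l v l *~ (l == i) = v i.
Proof.
rewrite (bigD1 i) //= eqxx big1 ?addr0 // => l /negbTE ->; by rewrite mulr0z.
Qed.

Lemma lin_diff (V : zmodType) k (v : 'I_k -> V) i j : i != j ->
  lin v (diffc i j) = v i - v j.
Proof.
move=> ij; rewrite /lin.
have -> : \sum_l v l *~ coef (diffc i j) l = \sum_l (v l *~ (l == i) - v l *~ (l == j)).
  apply: eq_bigr => l _; rewrite -mulrzBr /coef ffunE.
  case: (eqVneq l i) => [->|li]; first by rewrite (negbTE ij) inordK.
  case: (eqVneq l j) => [->|lj]; by rewrite inordK.
by rewrite sumrB !sum_delta.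
Qed.

Lemma sum_pair (A B : zmodType) (I : Type) (r : seq I) (P : pred I) (F : I -> A) (K : I -> B) :
  \sum_(i <- r | P i) ((F i, K i) : (A * B)%type) = (\sum_(i <- r | P i) F i, \sum_(i <- r | P i) K i).
Proof.
elim: r => [|a r IH]; first by rewrite !big_nil.
rewrite !big_cons; case: (P a) => //; rewrite IH //.
Qed.

Lemma Zp_nat_eq0 p n : (1 < p)%N -> (n < p)%N -> ((n%:R : 'Z_p) == 0) = (n == 0)%N.
Proof.
by move=> p1 np; rewrite Zp_nat -val_eqE /= Zp_cast // modn_small.
Qed.

Lemma Zp_intr_eq0 p (z : int) : (1 < p)%N -> (`|z| < p)%N ->
  ((z%:~R : 'Z_p) == 0) = (z == 0).
Proof.
move=> p1; case: z => n.
  rewrite /= => np; have -> : (n%:~R : 'Z_p) = n%:R by [].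
  by rewrite Zp_nat_eq0.
rewrite NegzE /= => np; rewrite mulrNz oppr_eq0.
have -> : ((n.+1)%:~R : 'Z_p) = (n.+1)%:R by [].
by rewrite Zp_nat_eq0.
Qed.


Lemma clear_den (s : seq rat) : exists D : nat, (0 < D)%N /\
  forall x, x \in s -> exists z : int, D%:R * x = z%:~R.
Proof.
elim: s => [|a s [D [D0 HD]]]; first by exists 1%N.
have da : (0 < `|denq a|)%N by rewrite absz_gt0 gt_eqF ?denq_gt0.
exists (D * `|denq a|)%N; split; first by rewrite muln_gt0 D0.
move=> x; rewrite inE => /orP [/eqP ->|xs].
  exists (D%:Z * numq a); rewrite intrM numqE natrM -mulrA; congr (_ * _).
  by rewrite mulrC natr_absz gtr0_norm ?denq_gt0.
have [z Hz] := HD x xs; exists (`|denq a|%:Z * z).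
by rewrite intrM -Hz natrM mulrAC mulrC.
Qed.

Lemma clear_den_fun n (x : 'I_n -> rat) : exists D : nat, (0 < D)%N /\
  forall i, D%:R * x i = (numq (D%:R * x i))%:~R.
Proof.
have [D [D0 HD]] := clear_den [seq x i | i <- enum 'I_n].
exists D; split => // i.
have [z ->] := HD (x i) (map_f _ (mem_enum _ i)).
by rewrite numq_int.
Qed.

Lemma avoid_bound (s : seq (rat * rat)) : exists B : rat, 0 <= B /\
  forall ab, ab \in s -> `|ab.1 / ab.2| <= B.
Proof.
elim: s => [|a s [B [B0 HB]]]; first by exists 0.
exists (B + `|a.1 / a.2|); split; first by rewrite addr_ge0.
move=> ab; rewrite inE => /orP [/eqP ->|abs]; first by rewrite lerDr.
by apply: le_trans (HB _ abs) _; rewrite lerDl.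
Qed.

Lemma avoid (s : seq (rat * rat)) :
  (forall ab, ab \in s -> (ab.1 != 0) || (ab.2 != 0)) ->
  exists t : rat, forall ab, ab \in s -> ab.1 + ab.2 * t != 0.
Proof.
move=> Hs; have [B [B0 HB]] := avoid_bound s.
exists (B + 1) => -[a b] abs /=.
have := Hs _ abs; have := HB _ abs => /= Hab.
case: (eqVneq b 0) => [->|b0]; first by rewrite mul0r addr0 orbF.
move=> _; apply/negP => /eqP E.
have Et : B + 1 = - (a / b).
  have E' : b * (B + 1) = - a by apply/eqP; rewrite -addr_eq0 addrC E.
  by rewrite -mulNr -E' [b * _]mulrC mulfK.
have : `|B + 1| <= B by rewrite Et normrN.
rewrite ger0_norm; last by rewrite addr_ge0.
by rewrite gerDl ler10.
Qed.

Definition dot k (c : C k) (w : 'I_k -> rat) : rat := \sum_i (coef c i)%:~R * w i.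

Lemma dot_lin k (c : C k) (w1 w2 : 'I_k -> rat) t :
  dot c (fun i => w1 i + t * w2 i) = dot c w1 + dot c w2 * t.
Proof.
rewrite /dot mulr_suml -big_split /=; apply: eq_bigr => i _.
by rewrite mulrDr [t * w2 i]mulrC mulrA.
Qed.

Lemma combine k (R : {set C k}) (L : seq (C k)) :
  (forall c, c \in L -> exists w, (forall r, r \in R -> dot r w = 0) /\ dot c w != 0) ->
  exists w, (forall r, r \in R -> dot r w = 0) /\ (forall c, c \in L -> dot c w != 0).
Proof.
elim: L => [|c L IH] HL.
  exists (fun _ => 0); split => // r _; rewrite /dot big1 // => i _; by rewrite mulr0.
case: IH => [c' Hc'|w1 [R1 L1]]; first by apply: HL; rewrite inE Hc' orbT.
have [w2 [R2 c2]] := HL c (mem_head _ _).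
have [t Ht] : exists t : rat, forall ab, ab \in [seq (dot c' w1, dot c' w2) | c' <- c :: L] ->
    ab.1 + ab.2 * t != 0.
  apply: avoid => ab /mapP [c' Hc' ->] /=.
  move: Hc'; rewrite inE => /orP [/eqP ->|Hc']; first by rewrite c2 orbT.
  by rewrite L1.
exists (fun i => w1 i + t * w2 i); split.
  by move=> r rR; rewrite dot_lin R1 // R2 // mul0r addr0.
move=> c' Hc'; rewrite dot_lin; apply: (Ht (dot c' w1, dot c' w2)).
by apply: map_f.
Qed.

Definition rowc k (c : C k) : 'rV[rat]_k := \row_i (coef c i)%:~R.
Definition Mat k (R : {set C k}) : 'M[rat]_(#|{: C k}|, k) :=
  \matrix_(j, i) (if enum_val j \in R then coef (enum_val j) i else 0)%:~R.

Lemma ker_vec k (R : {set C k}) (c : C k) : ~~ (rowc c <= Mat R)%MS ->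
  exists w, (forall r, r \in R -> dot r w = 0) /\ dot c w != 0.
Proof.
rewrite submxE => NZ.
set K := cokermx (Mat R) in NZ *.
have [j Hj] : exists j, (rowc c *m K) 0 j != 0.
  apply/existsP; apply: contraR NZ => /existsPn H.
  apply/eqP/matrixP => i j; rewrite ord1 [RHS]mxE; exact/eqP/negPn/H.
exists (fun i => K i j); split.
  move=> r rR.
  have := mulmx_coker (Mat R) => /matrixP /(_ (enum_rank r) j).
  rewrite [RHS]mxE mxE => <-; apply: eq_bigr => i _.
  by rewrite [Mat R _ _]mxE enum_rankK rR.
move: Hj; rewrite mxE; congr (_ != _); apply: eq_bigr => i _; by rewrite mxE.
Qed.

Definition Mint k (R : {set C k}) (j : 'I_#|{: C k}|) (i : 'I_k) : int :=
  if enum_val j \in R then coef (enum_val j) i else 0.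

Lemma sub_vec k (R : {set C k}) (c : C k) : (rowc c <= Mat R)%MS ->
  exists D : nat, exists m : 'I_#|{: C k}| -> int, (0 < D)%N /\
    forall i, D%:Z * coef c i = \sum_j m j * Mint R j i.
Proof.
case/submxP => u E.
have [D [D0 HD]] := clear_den_fun (fun j => u 0 j).
exists D, (fun j => numq (D%:R * u 0 j)); split => // i.
apply: (@intr_inj rat); rewrite intrM.
have -> : (coef c i)%:~R = (rowc c) 0 i by rewrite mxE.
rewrite E mxE rmorph_sum mulr_sumr; apply: eq_bigr => j _.
by rewrite rmorphM /= -HD -mulrA [Mat R _ _]mxE.
Qed.

Lemma fin_bound (T : finType) (Q : T -> nat -> Prop) :
  (forall x n m, (n <= m)%N -> Q x n -> Q x m) -> (forall x, exists n, Q x n) ->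
  exists N, forall x, Q x N.
Proof.
move=> Qm Qe.
suff [N HN] : exists N, forall x, x \in enum T -> Q x N.
  by exists N => x; apply: HN; rewrite mem_enum.
elim: (enum T) => [|a s [N HN]]; first by exists 0%N.
have [n Hn] := Qe a.
exists (maxn N n) => x; rewrite inE => /orP [/eqP ->|xs].
  by apply: Qm Hn; rewrite leq_maxr.
by apply: Qm (HN x xs); rewrite leq_maxl.
Qed.

Lemma key k : exists N, (0 < N)%N /\ forall (R : {set C k}) (c : C k),
  (rowc c <= Mat R)%MS -> exists D : nat, exists m : 'I_#|{: C k}| -> int,
    (0 < D)%N /\ (D <= N)%N /\ forall i, D%:Z * coef c i = \sum_j m j * Mint R j i.
Proof.
pose Q := fun (x : ({set C k} * C k)%type) n => (rowc x.2 <= Mat x.1)%MS ->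
  exists D : nat, exists m : 'I_#|{: C k}| -> int,
    (0 < D)%N /\ (D <= n)%N /\ forall i, D%:Z * coef x.2 i = \sum_j m j * Mint x.1 j i.
have [N HN] : exists N, forall x, Q x N.
  apply: fin_bound.
    move=> x n m nm H sub; have [D [mm [D0 [DN HD]]]] := H sub.
    exists D, mm; split => //; split => //; exact: leq_trans DN nm.
  move=> [R c]; rewrite /Q /=; case: (boolP (rowc c <= Mat R)%MS) => sub.
    have [D [m [D0 HD]]] := sub_vec sub.
    by exists D => _; exists D, m.
  by exists 0%N => sub'; move: sub; rewrite ?sub'.
exists (maxn N 1); split; first by rewrite leq_max orbT.
move=> R c sub; have [D [m [D0 [DN HD]]]] := HN (R, c) sub.
exists D, m; split => //; split => //; exact: leq_trans DN (leq_maxl _ _).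
Qed.

Lemma killG k (V : zmodType) (g : 'I_k -> V) (R : {set C k}) (c : C k) D
    (m : 'I_#|{: C k}| -> int) :
  (forall r, r \in R -> lin g r = 0) ->
  (forall i, D%:Z * coef c i = \sum_j m j * Mint R j i) -> lin g c *+ D = 0.
Proof.
move=> HR HD; rewrite /lin -sumrMnl.
have -> : \sum_i g i *~ coef c i *+ D = \sum_i \sum_j g i *~ (m j * Mint R j i).
  apply: eq_bigr => i _; rewrite -mulrz_nat -mulrzA. rewrite natz mulrC HD mulrz_sumr //.
rewrite exchange_big /=; apply: big1 => j _.
have -> : \sum_i g i *~ (m j * Mint R j i) = (\sum_i g i *~ Mint R j i) *~ m j.
  by rewrite mulrz_suml; apply: eq_bigr => i _; rewrite mulrC mulrzA.
rewrite /Mint; case: (boolP (enum_val j \in R)) => jR.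
  by rewrite -/(lin g (enum_val j)) HR // mul0rz.
by rewrite big1 ?mul0rz // => i _; rewrite mulr0z.
Qed.

Lemma realize k : exists N, (0 < N)%N /\ forall (V : zmodType) (g : 'I_k -> V),
  theta_gt V N -> exists z : 'I_k -> int, forall c, (lin g c == 0) = (lin z c == 0).
Proof.
have [N [N0 HN]] := key k.
exists N; split => // V g Hth.
pose R := [set c : C k | lin g c == 0].
have HR : forall r, r \in R -> lin g r = 0 by move=> r; rewrite inE => /eqP.
have nsub : forall c, c \notin R -> ~~ (rowc c <= Mat R)%MS.
  move=> c cR; apply/negP => sub; have [D [m [D0 [DN HD]]]] := HN R c sub.
  have cR' : lin g c != 0 by move: cR; rewrite inE.
  by have := Hth _ cR' D D0 DN; rewrite (killG HR HD) eqxx.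
have [w [Rw Lw]] : exists w, (forall r, r \in R -> dot r w = 0) /\
    (forall c, c \in enum [set c | c \notin R] -> dot c w != 0).
  apply: combine => c; rewrite mem_enum inE => cR; apply: ker_vec; exact: nsub.
have [D [D0 HD]] := clear_den_fun w.
exists (fun i => numq (D%:R * w i)) => c.
have E : (lin (fun i => numq (D%:R * w i)) c)%:~R = D%:R * dot c w :> rat.
  rewrite /lin rmorph_sum /dot mulr_sumr; apply: eq_bigr => i _.
  by rewrite rmorphMz /= -HD -mulrzr -mulrA [w i * _]mulrC.
have -> : (lin (fun i => numq (D%:R * w i)) c == 0) =
  ((lin (fun i => numq (D%:R * w i)) c)%:~R == 0 :> rat) by rewrite intr_eq0.
rewrite E mulf_eq0 pnatr_eq0 (negbTE (lt0n_neq0 D0)) /=.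
case: (boolP (c \in R)) => cR.
  by rewrite Rw // eqxx; move: cR; rewrite inE.
have cR' : (lin g c == 0) = false by apply/negbTE; move: cR; rewrite inE.
by rewrite cR'; apply/esym/negbTE/Lw; rewrite mem_enum inE.
Qed.

Theorem corollary4p7 (H : finZmodType) (k : nat) :
  (0 < k)%N ->
  (forall n : nat, exists p : nat,
      (n < p)%N /\ prime p /\ all_nzs_subsets_sequenceable ('Z_p * H)%type k) ->
  exists N : nat, (0 < N)%N /\
    forall G : zmodType, theta_gt G N ->
      all_nzs_subsets_sequenceable (G * H)%type k.
Proof.
move=> k0 Hp; have [N [N0 HN]] := realize k.
exists N; split => // G Hth S US sS S0 nzS.
pose X (i : 'I_k) : (G * H)%type := nth 0 S i.
pose g i := (X i).1; pose h i := (X i).2.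
have XE : forall i, X i = (g i, h i) by move=> i; rewrite /g /h; case: (X i).
have [z Hz] := HN G g Hth.
pose B := (\sum_(c : C k) `|lin z c|)%N.
have [p [Bp [pp HSp]]] := Hp B.
have p1 : (1 < p)%N := prime_gt1 pp.
pose a (i : 'I_k) : 'Z_p := (z i)%:~R.
pose Y (i : 'I_k) : ('Z_p * H)%type := (a i, h i).
have Ha : forall c, (lin a c == 0) = (lin g c == 0).
  move=> c; rewrite Hz.
  have -> : lin a c = (lin z c)%:~R.
    by rewrite /lin rmorph_sum; apply: eq_bigr => i _; rewrite rmorphMz.
  apply: Zp_intr_eq0 => //; apply: leq_ltn_trans Bp.
  by rewrite /B (bigD1 c) //= leq_addr.
have pair0 : forall (U W : zmodType) (u : U) (w : W), ((u, w) == 0 :> (U * W)%type) = (u == 0) && (w == 0).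
  by [].
have sumX : forall T : {set 'I_k}, (\sum_(i in T) X i == 0) = (lin g (setc T) == 0) && (\sum_(i in T) h i == 0).
  by move=> T; rewrite (eq_bigr _ (fun i _ => XE i)) sum_pair pair0 lin_set.
have sumY : forall T : {set 'I_k}, (\sum_(i in T) Y i == 0) = (lin a (setc T) == 0) && (\sum_(i in T) h i == 0).
  by move=> T; rewrite sum_pair pair0 lin_set.
have Yinj : injective Y.
  move=> i j EY; apply/eqP; apply: contraT => ij.
  have Xij : X i != X j by rewrite /X nth_uniq ?sS.
  case: EY => Ea Eh.
  have := Ha (diffc i j); rewrite !lin_diff // Ea subrr eqxx => /esym.
  rewrite subr_eq0 => /eqP Eg.
  by move: Xij; rewrite XE (XE j) Eg Eh eqxx.
pose S' := map Y (enum 'I_k).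
have SX : map X (enum 'I_k) = S.
  have -> : map X (enum 'I_k) = map (nth 0 S) (map val (enum 'I_k)) by rewrite -map_comp.
  rewrite val_enum_ord -sS; exact: mkseq_nth.
have sumS : forall (V : zmodType) (F : 'I_k -> V), \sum_(y <- map F (enum 'I_k)) y = \sum_(i in [set: 'I_k]) F i.
  move=> V F; rewrite big_map big_enum_cond /=; apply: eq_bigl => i; by rewrite in_setT.
have nzS' : nonzero_sum S'.
  move: nzS; rewrite /nonzero_sum -SX !sumS sumX sumY Ha //.
have [x' [px' Hx']] : sequenceable S'.
  apply: HSp => //.
  - by rewrite map_inj_uniq ?enum_uniq.
  - by rewrite size_map size_enum_ord.
  - apply/mapP => -[i _ /esym [Ea Eh]].
    have : X i != 0 by apply: contraNneq S0 => <-; rewrite -SX map_f ?mem_enum.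
    rewrite XE pair0 Eh eqxx andbT.
    have := Ha (setc [set i]); rewrite !lin_set !big_set1 Ea eqxx => <-.
    by [].
pose f (y : ('Z_p * H)%type) : 'I_k := if [pick i | Y i == y] is Some i then i else Ordinal k0.
have Yf : forall y, y \in S' -> Y (f y) = y.
  move=> y /mapP [i _ ->]; rewrite /f; case: pickP => [j /eqP //|none].
  by have := none i; rewrite eqxx.
pose s := map f x'.
have x'E : x' = map Y s.
  rewrite /s -map_comp; apply/esym/map_id_in => y yx'; apply: Yf.
  by rewrite -(perm_mem px').
have ps : perm_eq s (enum 'I_k).
  have := perm_map f px'; rewrite /S' -map_comp.
  have -> : map (f \o Y) (enum 'I_k) = enum 'I_k.
    apply: map_id_in => i _ /=; apply: Yinj; apply: Yf; exact: map_f (mem_enum _ _).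
  by [].
have us : uniq s by rewrite (perm_uniq ps) enum_uniq.
exists (map X s); split; first by rewrite -SX perm_map.
case: Hx' => [Hseq|Hrot].
  left; apply: (transfer (Y := Y)) => //; last by rewrite -x'E.
  by move=> T /eqP HX; apply/eqP; rewrite sumY Ha; rewrite sumX in HX.
exfalso; move: Hrot => /andP [Hr _]; rewrite ps_nth // take_size in Hr.
by move: nzS'; rewrite /nonzero_sum -(perm_big _ px') Hr.
Qed.
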